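(* Let $S$ be an inverse monoid and $(X,E(S),p)$ a (global) presheaf of geodesic metric spaces on which $S$ acts properly and coboundedly, and fix $x_1\in X_1$. For $R\ge0$ let $d^R$ be the path metric on $S$ of the simplicial graph $S^R$ with vertex set $S$ in which distinct $s,t$ are adjacent iff $d(x_1\cdot s,x_1\cdot t)\le R$ (edges of length $1$; $d^R(s,t)=\infty$ if no path exists). Then there exists $T\ge0$ such that for every $R\ge T$ the extended metric space $(S,d^R)$ is quasi-isometric to $(X,d)$.
   Context: An inverse monoid is a monoid $S$ (identity $1$) in which every $s$ has a unique $s^{-1}$ with $ss^{-1}s=s$, $s^{-1}ss^{-1}=s^{-1}$; $E(S)$ is its set of idempotents, a meet-semilattice with meet $ef$. Presheaf: a set $X$ with maps $p\colon X\to E(S)$ and $X\times E(S)\to X$ such that $(x\cdot e)\cdot f=x\cdot ef$, $x\cdot p(x)=x$, $p(x\cdot e)=p(x)e$; fibers $X_e=p^{-1}(e)$. A (global) presheaf of metric spaces additionally has $p$ surjective, each $X_e$ a metric space $d_e$, and $d_e(x,y)\ge d_{ef}(x\cdot f,y\cdot f)$ for $x,y\in X_e$; $d(x,y)=d_e(x,y)$ for $x,y\in X_e$ and $\infty$ across fibers. Geodesic: finite distances $D$ are realised by isometric embeddings of $[0,D]$. Action: a right action $X\times S\to X$ extending the presheaf map on $E(S)$, with $p(x\cdot s)=s^{-1}p(x)s$ and $d_e(x,y)\ge d_{s^{-1}es}(x\cdot s,y\cdot s)$ for $x,y\in X_e$. Proper: for every $y_1\in X_1$ and $R\ge0$ there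 is a finite $\mathcal C\subseteq S$ with $\{s: d(y_1\cdot s,y_1\cdot s^{-1}s)\le R\}\subseteq\{ce: c\in\mathcal C,e\in E(S)\}$. Cobounded: there are $x_1'\in X_1$, $T_0\ge0$ such that every point of $X$ equals $y\cdot s$ for some $s\in S$ and $y$ with $d(x_1',y)\le T_0$. A map $f$ between extended metric spaces $(A,d_A),(B,d_B)$ is a quasi-isometry if there are $L\ge1$, $C\ge0$ with $d_A(a,a')<\infty$ iff $d_B(f(a),f(a'))<\infty$, $\frac1L d_A(a,a')-C\le d_B(f(a),f(a'))\le Ld_A(a,a')+C$ when finite, and every point of $B$ within distance $C$ of $f(A)$; spaces are quasi-isometric if such a map exists. *)

(* Defs.v *)
From Stdlib Require Import Reals List.
From Coquelicot Require Import Coquelicot.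
Open Scope R_scope.

Section Defs.
Context {S : Type} (mul : S -> S -> S) (one : S) (inv : S -> S).

Definition is_inverse_monoid : Prop :=
  (forall a b c, mul (mul a b) c = mul a (mul b c)) /\
  (forall a, mul one a = a) /\
  (forall a, mul a one = a) /\
  (forall s, mul (mul s (inv s)) s = s /\ mul (mul (inv s) s) (inv s) = inv s) /\
  (forall s t, mul (mul s t) s = s -> mul (mul t s) t = t -> t = inv s).

Definition idempotent (e : S) : Prop := mul e e = e.

Context {X : Type} (p : X -> S) (act : X -> S -> X) (d : X -> X -> Rbar).

(** (Global) presheaf of metric spaces over E(S): fibres X_e = p^{-1}(e),
    d x y finite iff x,y lie in the same fibre, and then d = d_e is a metric. *)
Definition is_presheaf_of_metric_spaces : Prop :=
  (forall x, idempotent (p x)) /\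
  (forall e, idempotent e -> exists x, p x = e) /\
  (forall x e f, idempotent e -> idempotent f ->
      act (act x e) f = act x (mul e f)) /\
  (forall x, act x (p x) = x) /\
  (forall x e, idempotent e -> p (act x e) = mul (p x) e) /\
  (forall x y, is_finite (d x y) <-> p x = p y) /\
  (forall x y, Rbar_le (Finite 0) (d x y)) /\
  (forall x, d x x = Finite 0) /\
  (forall x y, d x y = Finite 0 -> x = y) /\
  (forall x y, d x y = d y x) /\
  (forall x y z, p x = p y -> p y = p z ->
      Rbar_le (d x z) (Rbar_plus (d x y) (d y z))) /\
  (forall x y e, idempotent e -> p x = p y ->
      Rbar_le (d (act x e) (act y e)) (d x y)).

Definition is_geodesic : Prop :=
  forall x y D, d x y = Finite D ->
    exists g : R -> X, g 0 = x /\ g D = y /\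
      forall a b, 0 <= a <= D -> 0 <= b <= D ->
        d (g a) (g b) = Finite (Rabs (a - b)).

Definition is_action : Prop :=
  (forall x s t, act (act x s) t = act x (mul s t)) /\
  (forall x s, p (act x s) = mul (mul (inv s) (p x)) s) /\
  (forall x y s, p x = p y -> Rbar_le (d (act x s) (act y s)) (d x y)).

Definition is_proper_action : Prop :=
  forall y1 (Rad : R), p y1 = one -> 0 <= Rad ->
    exists C : list S, forall s,
      Rbar_le (d (act y1 s) (act y1 (mul (inv s) s))) (Finite Rad) ->
      exists c e, In c C /\ idempotent e /\ s = mul c e.

Definition is_cobounded_action : Prop :=
  exists x1' (T0 : R), p x1' = one /\ 0 <= T0 /\
    forall z, exists s y, Rbar_le (d x1' y) (Finite T0) /\ z = act y s.

End Defs.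

Inductive walk {V : Type} (adj : V -> V -> Prop) : nat -> V -> V -> Prop :=
| walk_nil : forall v, walk adj 0 v v
| walk_cons : forall n u v w, adj u v -> walk adj n v w -> walk adj (S n) u w.

(** Path metric of a graph with edges of length 1: the infimum of the
    lengths of walks (p_infty if there is no walk). *)
Definition graph_dist {V : Type} (adj : V -> V -> Prop) (u v : V) : Rbar :=
  Glb_Rbar (fun r => exists n, walk adj n u v /\ r = INR n).

Definition SR_adj {S X : Type} (act : X -> S -> X) (d : X -> X -> Rbar)
  (x1 : X) (Rad : R) (s t : S) : Prop :=
  s <> t /\ Rbar_le (d (act x1 s) (act x1 t)) (Finite Rad).

Definition dR {S X : Type} (act : X -> S -> X) (d : X -> X -> Rbar)
  (x1 : X) (Rad : R) : S -> S -> Rbar :=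
  graph_dist (SR_adj act d x1 Rad).

Definition is_quasi_isometry {A B : Type} (dA : A -> A -> Rbar)
  (dB : B -> B -> Rbar) (f : A -> B) : Prop :=
  exists (L C : R), 1 <= L /\ 0 <= C /\
    (forall a a', is_finite (dA a a') <-> is_finite (dB (f a) (f a'))) /\
    (forall a a' r r', dA a a' = Finite r -> dB (f a) (f a') = Finite r' ->
        r / L - C <= r' <= L * r + C) /\
    (forall b, exists a, Rbar_le (dB b (f a)) (Finite C)).

Definition quasi_isometric {A B : Type} (dA : A -> A -> Rbar)
  (dB : B -> B -> Rbar) : Prop :=
  exists f : A -> B, is_quasi_isometry dA dB f.

(* Main.v *)
Require Import Defs.
From Stdlib Require Import Reals List Lra Lia ZArith Classical.
From Coquelicot Require Import Coquelicot.
Open Scope R_scope.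

Lemma walk_snoc {V : Type} (adj : V -> V -> Prop) n u v w :
  walk adj n u v -> adj v w -> walk adj (S n) u w.
Proof.
  induction 1; intros.
  - eapply walk_cons; eauto. constructor.
  - eapply walk_cons; eauto.
Qed.

Lemma fin_le (x : Rbar) (r : R) : Rbar_le (Finite 0) x -> Rbar_le x (Finite r) ->
  exists c, x = Finite c /\ 0 <= c <= r.
Proof. destruct x; simpl; intros; try contradiction; eauto. Qed.

Lemma fin_fin (x : Rbar) : is_finite x -> x = Finite (real x).
Proof. unfold is_finite; intros H; now rewrite H. Qed.

Lemma glb_empty (E : R -> Prop) : (forall x, ~ E x) -> Glb_Rbar E = p_infty.
Proof.
  intros H. destruct (Glb_Rbar_correct E) as [_ H2].
  specialize (H2 p_infty). destruct (Glb_Rbar E); simpl in H2; auto;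
  exfalso; apply H2; intros x Hx; now destruct (H x).
Qed.

Theorem lemma3p9
  (S : Type) (mul : S -> S -> S) (one : S) (inv : S -> S)
  (HS : is_inverse_monoid mul one inv)
  (X : Type) (p : X -> S) (act : X -> S -> X) (d : X -> X -> Rbar)
  (Hpre : is_presheaf_of_metric_spaces mul p act d)
  (Hgeo : is_geodesic d)
  (Hact : is_action mul inv p act d)
  (Hprop : is_proper_action mul one inv p act d)
  (Hcob : is_cobounded_action one p act d)
  (x1 : X) (Hx1 : p x1 = one) :
  exists T : R, 0 <= T /\
    forall Rad : R, T <= Rad -> quasi_isometric (dR act d x1 Rad) d.
Proof.
  destruct Hpre as [Hidem [Hsurj [Hcomp [Hpx [Hpe [Hfin [Hnn [Hrefl [Hsep [Hsym [Htri Hres]]]]]]]]]]].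
  destruct Hact as [Hass [Hpact Hdact]].
  destruct Hcob as [x1' [T0 [Hx1' [HT0 Hcov]]]].
  assert (Tri : forall x y z a b, Rbar_le (d x y) (Finite a) -> Rbar_le (d y z) (Finite b) ->
     Rbar_le (d x z) (Finite (a + b))).
  { intros x y z a b H1 H2.
    destruct (fin_le _ _ (Hnn x y) H1) as [c1 [E1 C1]].
    destruct (fin_le _ _ (Hnn y z) H2) as [c2 [E2 C2]].
    assert (P1 : p x = p y) by (apply Hfin; rewrite E1; reflexivity).
    assert (P2 : p y = p z) by (apply Hfin; rewrite E2; reflexivity).
    pose proof (Htri x y z P1 P2) as H. rewrite E1, E2 in H.
    destruct (d x z); simpl in *; auto; lra. }
  assert (Sy : forall x y r, Rbar_le (d x y) (Finite r) -> Rbar_le (d y x) (Finite r)).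
  { intros; now rewrite Hsym. }
  assert (Pe : forall x y r, Rbar_le (d x y) (Finite r) -> p x = p y).
  { intros x y r H. destruct (fin_le _ _ (Hnn x y) H) as [c [E _]].
    apply Hfin; rewrite E; reflexivity. }
  assert (Kfin : is_finite (d x1 x1')) by (apply Hfin; congruence).
  set (K := real (d x1 x1')).
  assert (HK : Rbar_le (d x1 x1') (Finite K)).
  { unfold K. rewrite (fin_fin _ Kfin) at 1. simpl. lra. }
  assert (K0 : 0 <= K).
  { pose proof (Hnn x1 x1') as H. rewrite (fin_fin _ Kfin) in H. exact H. }
  set (T' := K + T0).
  assert (Cov : forall z, exists s, Rbar_le (d z (act x1 s)) (Finite T')).
  { intros z. destruct (Hcov z) as [s [y [Hy ->]]]. exists s.
    apply Sy. apply Tri with (act x1' s).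
    - eapply Rbar_le_trans; [apply Hdact; congruence | exact HK].
    - eapply Rbar_le_trans; [apply Hdact; eapply Pe; eauto | exact Hy]. }
  exists (2 * T' + 1). split; [unfold T'; lra|].
  intros Rad HRad.
  set (adj := SR_adj act d x1 Rad).
  set (E := fun s t (r : R) => exists n, walk adj n s t /\ r = INR n).
  assert (Wk : forall n s t, walk adj n s t -> Rbar_le (d (act x1 s) (act x1 t)) (Finite (Rad * INR n))).
  { induction 1.
    - rewrite Hrefl. simpl. lra.
    - destruct H as [_ H]. replace (Rad * INR (Datatypes.S n)) with (Rad + Rad * INR n)
        by (rewrite S_INR; ring). eapply Tri; eauto. }
  assert (Gw : forall s t D, d (act x1 s) (act x1 t) = Finite D ->
     exists m, walk adj m s t /\ INR m <= D + 1).
  { intros s t D HD.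
    assert (D0 : 0 <= D) by (pose proof (Hnn (act x1 s) (act x1 t)) as H; rewrite HD in H; exact H).
    destruct (Hgeo _ _ _ HD) as [g [G0 [GD Gd]]].
    destruct (archimed D) as [A1 A2].
    set (n := Z.to_nat (up D)).
    assert (Hn : INR n = IZR (up D)).
    { unfold n. rewrite INR_IZR_INZ, Z2Nat.id; auto. apply le_IZR. lra. }
    set (h := fun k : nat => g (Rmin (INR k) D)).
    assert (Hh : forall k, Rbar_le (d (h k) (h (Datatypes.S k))) (Finite 1)).
    { intros k. unfold h. rewrite Gd.
      - simpl. pose proof (S_INR k). pose proof (pos_INR k).
        unfold Rmin; repeat destruct Rle_dec; apply Rabs_le; simpl in *; lra.
      - pose proof (pos_INR k). unfold Rmin; destruct Rle_dec; lra.
      - pose proof (pos_INR (Datatypes.S k)). unfold Rmin; destruct Rle_dec; lra. }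
    assert (Ind : forall k, (k <= n)%nat -> exists u m, (m <= k)%nat /\ walk adj m s u /\
        Rbar_le (d (act x1 u) (h k)) (Finite T') /\ (k = n -> u = t)).
    { induction k; intros Hk.
      - exists s, 0%nat. split; [lia|]. split; [constructor|]. split.
        + unfold h. simpl. rewrite Rmin_left by lra. rewrite G0, Hrefl. simpl. unfold T'; lra.
        + intros E0. exfalso. assert (INR n = 0) by (rewrite <- E0; reflexivity). lra.
      - destruct IHk as [u [m [Hm [Hw [Hu _]]]]]; [lia|].
        assert (Ex : exists v, Rbar_le (d (act x1 v) (h (Datatypes.S k))) (Finite T') /\
                   (Datatypes.S k = n -> v = t)).
        { destruct (Nat.eq_dec (Datatypes.S k) n) as [e|ne].
          - exists t. split; [|auto]. unfold h. rewrite e, Rmin_right by lra. rewrite GD, Hrefl.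
            simpl. unfold T'; lra.
          - destruct (Cov (h (Datatypes.S k))) as [v Hv]. exists v. split; [apply Sy; exact Hv|].
            intros; contradiction. }
        destruct Ex as [v [Hv Hvt]].
        assert (Duv : Rbar_le (d (act x1 u) (act x1 v)) (Finite (2 * T' + 1))).
        { replace (2 * T' + 1) with ((T' + 1) + T') by ring.
          eapply Tri; [eapply Tri; [exact Hu | apply Hh] | apply Sy; exact Hv]. }
        exists v. destruct (classic (u = v)) as [e|ne].
        + subst v. exists m. repeat split; auto.
        + exists (Datatypes.S m). split; [lia|]. split; [|auto].
          eapply walk_snoc; eauto. split; auto.
          eapply Rbar_le_trans; [exact Duv|]. simpl; lra. }
    destruct (Ind n (le_n n)) as [u [m [Hm [Hw [_ Hut]]]]].
    rewrite (Hut eq_refl) in Hw. exists m. split; auto.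
    apply le_INR in Hm. lra. }
  exists (act x1). exists (Rad + 1), (T' + 1).
  assert (T'0 : 0 <= T') by (unfold T'; lra).
  assert (Lb : forall s t, Rbar_le (Finite 0) (dR act d x1 Rad s t)).
  { intros s t. destruct (Glb_Rbar_correct (E s t)) as [_ H]. apply H.
    intros x [n [_ ->]]. simpl. apply pos_INR. }
  assert (Ub : forall s t n, walk adj n s t -> Rbar_le (dR act d x1 Rad s t) (Finite (INR n))).
  { intros s t n Hw. destruct (Glb_Rbar_correct (E s t)) as [H _]. apply H. exists n; auto. }
  split; [lra|]. split; [lra|]. split; [|split].
  - intros s t. split; intros H.
    + destruct (classic (exists n, walk adj n s t)) as [[n Hn]|Hn].
      * pose proof (Wk _ _ _ Hn) as W. destruct (fin_le _ _ (Hnn _ _) W) as [c [Ec _]].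
        rewrite Ec. reflexivity.
      * exfalso. unfold dR, graph_dist in H.
        rewrite glb_empty in H; [discriminate|].
        intros x [n [Hw _]]. apply Hn; eauto.
    + destruct (Gw s t _ (fin_fin _ H)) as [m [Hm _]].
      pose proof (Ub _ _ _ Hm) as U. destruct (fin_le _ _ (Lb s t) U) as [c [Ec _]].
      rewrite Ec; reflexivity.
  - intros s t r r' Hr Hr'.
    assert (r0 : 0 <= r) by (pose proof (Lb s t) as H; rewrite Hr in H; exact H).
    assert (r'0 : 0 <= r') by (pose proof (Hnn (act x1 s) (act x1 t)) as H; rewrite Hr' in H; exact H).
    split.
    + destruct (Gw s t _ Hr') as [m [Hm Hmle]].
      pose proof (Ub _ _ _ Hm) as U. rewrite Hr in U. simpl in U.
      assert (r / (Rad + 1) <= r).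
      { unfold Rdiv. rewrite <- (Rmult_1_r r) at 2. apply Rmult_le_compat_l; auto.
        rewrite <- Rinv_1. apply Rinv_le_contravar; lra. }
      lra.
    + assert (r' / Rad <= r).
      { destruct (Glb_Rbar_correct (E s t)) as [_ H].
        assert (Rbar_le (Finite (r' / Rad)) (Finite r)).
        { rewrite <- Hr. apply H. intros x [n [Hw ->]]. pose proof (Wk _ _ _ Hw) as W.
          rewrite Hr' in W. simpl in W |- *.
          apply Rmult_le_reg_l with Rad; [lra|].
          field_simplify; lra. }
        exact H0. }
      assert (r' <= Rad * r).
      { apply Rmult_le_compat_l with (r := Rad) in H; [|lra].
        field_simplify in H; lra. }
      nra.
  - intros z. destruct (Cov z) as [s Hs]. exists s.
    eapply Rbar_le_trans; [exact Hs|]. simpl; lra.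
Qed.
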